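(* Let $H\le\mathrm{GL}_n(q)$ and suppose that with respect to a basis $\{v_1,\dots,v_n\}$ of $V=\mathbb{F}_q^n$, every $g\in H$ has the block upper-triangular form $$\begin{pmatrix} g_k & g_{k,k-1} & \cdots & g_{k,1}\\ 0 & g_{k-1} & \cdots & g_{k-1,1}\\ \vdots & & \ddots & \vdots\\ 0 & 0 & \cdots & g_1\end{pmatrix},$$ where each $g\mapsto g_i\in\mathrm{GL}_{n_i}(q)$ is an irreducible representation of $H$ and $n_1+\dots+n_k=n$, and suppose $n_1<n$, so that $H$ stabilises $U=\langle v_{n-n_1+1},\dots,v_n\rangle$. Then there exists $z\in\mathrm{SL}_n(q)$ such that $D(\mathrm{GL}_n(q))\cap H^z\le Z(\mathrm{GL}_n(q))$.
   Context: Matrices act on row vectors from the right. $D(\mathrm{GL}_n(q))$ denotes the diagonal matrices with respect to $\{v_1,\dots,v_n\}$, $Z(\mathrm{GL}_n(q))$ the scalar matrices, and $H^z=z^{-1}Hz$. *)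

(* Defs.v *)
From HB Require Import structures.
From mathcomp Require Import all_boot all_order all_algebra all_fingroup all_field.
Set Implicit Arguments. Unset Strict Implicit. Unset Printing Implicit Defensive.
Import GRing.Theory.
Local Open Scope ring_scope.

Definition mxnat (F : fieldType) n (g : 'M[F]_n) (i j : nat) : F :=
  match @insub nat (fun k => k < n)%N _ i, @insub nat (fun k => k < n)%N _ j with
  | Some i', Some j' => g i' j'
  | _, _ => 0
  end.

(* Blocks are listed top-to-bottom by their sizes ns = [:: n_k; ...; n_1].
   block_off ns b = first (0-based) row/column index of block b. *)
Definition block_off (ns : seq nat) (b : nat) : nat := sumn (take b ns).

Definition block_upper (F : fieldType) n (ns : seq nat) (g : 'M[F]_n) : Prop :=
  forall (b : nat) (i j : 'I_n),
    (b <= size ns)%N -> (j < block_off ns b <= i)%N -> g i j = 0.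

Definition diag_block (F : fieldType) n (ns : seq nat) (g : 'M[F]_n) (b : nat)
  : 'M[F]_(nth 0%N ns b) :=
  \matrix_(i, j) mxnat g (block_off ns b + i) (block_off ns b + j).

Definition mx_irreducible_set (F : fieldType) m (S : {pred 'M[F]_m}) : Prop :=
  (0 < m)%N /\
  forall U : 'M[F]_m, (forall A, A \in S -> (U *m A <= U)%MS) ->
    U = 0 \/ row_full U.

Definition is_matrix_group (F : finFieldType) n (H : {set 'M[F]_n}) : Prop :=
  1%:M \in H /\ (forall g h, g \in H -> h \in H -> g *m h \in H) /\
  (forall g, g \in H -> g \in unitmx).

(* Main.v *)
Require Import Defs.
From HB Require Import structures.
From mathcomp Require Import all_boot all_order all_algebra all_fingroup all_field.
From mathcomp Require Import zify.
Import GRing.Theory.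
Local Open Scope ring_scope.

Section Aux.
Variables (F : fieldType) (n m : nat).

Definition Nmx : 'M[F]_n := \matrix_(i, j) ((m <= i)%N && (j < m)%N)%:R.

Lemma NN : Nmx *m Nmx = 0.
Proof.
apply/matrixP => i j; rewrite !mxE; apply: big1 => k _; rewrite !mxE.
by case: (ltnP k m) => hk; rewrite ?(leqNgt m k) ?hk /= ?andbF ?mulr0 ?mul0r.
Qed.

Lemma NdN (d : 'rV[F]_n) : Nmx *m diag_mx d *m Nmx = 0.
Proof.
rewrite -mulmxA mul_diag_mx.
apply/matrixP => i j; rewrite !mxE; apply: big1 => k _; rewrite !mxE.
by case: (ltnP k m) => hk; rewrite ?(leqNgt m k) ?hk /= ?andbF ?mulr0 ?mul0r.
Qed.

Lemma key (d : 'rV[F]_n) (i j : 'I_n) : (m <= j)%N -> (i < m)%N ->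
  ((1%:M - Nmx) *m diag_mx d *m (1%:M + Nmx)) j i = d 0 j - d 0 i.
Proof.
move=> hj hi.
rewrite mulmxDr mulmx1 !mulmxBl mul1mx NdN subr0 mul_mx_diag mul_diag_mx !mxE hj hi /=.
have -> : (j == i) = false by apply/negbTE; apply/eqP => e; move: hi; rewrite -e ltnNge hj.
by rewrite mulr0n mulr1 mul1r sub0r addrC.
Qed.

End Aux.

Theorem mainTheorem11 (F : finFieldType) (n : nat) (H : {set 'M[F]_n})
  (ns : seq nat) :
  is_matrix_group H ->
  all (fun m => 0 < m)%N ns ->
  sumn ns = n ->
  (forall g, g \in H -> block_upper ns g) ->
  (forall b, (b < size ns)%N ->
     mx_irreducible_set [pred A | [exists g in H, A == diag_block ns g b]]) ->
  (last 0%N ns < n)%N ->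
  exists z : 'M[F]_n,
    \det z = 1 /\
    forall h, h \in H ->
      is_diag_mx (invmx z *m h *m z) -> is_scalar_mx (invmx z *m h *m z).
Proof.
move=> _ hpos hsum hup _ hlast.
case/lastP: ns hpos hsum hup hlast => [|s x] hpos hsum hup hlast.
  by rewrite /= -hsum in hlast.
rewrite last_rcons in hlast.
rewrite sumn_rcons in hsum.
have x0 : (0 < x)%N by move/allP: hpos; apply; rewrite mem_rcons mem_head.
set m := sumn s.
have hm0 : (0 < m)%N by rewrite /m; lia.
have hmn : (m < n)%N by rewrite /m; lia.
have hz : forall g, g \in H -> forall i j : 'I_n, (m <= i)%N -> (j < m)%N -> g i j = 0.
  move=> g /hup hg i j hi hj; apply: (hg (size s)).
    by rewrite size_rcons.
  by rewrite /block_off -cats1 take_size_cat // hj hi.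
pose P : 'M[F]_n := 1%:M + Nmx F n m.
pose Q : 'M[F]_n := 1%:M - Nmx F n m.
have PQ : P *m Q = 1%:M.
  by rewrite /P /Q mulmxDl mul1mx mulmxBr mulmx1 NN subr0 subrK.
have QP : Q *m P = 1%:M.
  by rewrite /P /Q mulmxBl mul1mx mulmxDr mulmx1 NN addr0 addrK.
have [_ Qu] := mulmx1_unit PQ.
have iQ : invmx Q = P by rewrite -[invmx Q]mul1mx -PQ mulmxK.
exists Q; split.
  rewrite det_trig; last first.
    apply/is_trig_mxP => i j hij; rewrite !mxE.
    have -> : (i == j) = false by apply/negbTE; rewrite neq_ltn hij.
    case: (ltnP j m) => hj; last by rewrite andbF subr0.
    have -> : (m <= i)%N = false by apply/negbTE; rewrite -ltnNge; lia.
    by rewrite subr0.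
  apply: big1 => i _; rewrite !mxE eqxx /=.
  by case: (ltnP i m) => hi; rewrite ?andbF ?andbT ?ltnNge ?hi ?subr0.
move=> h hH; rewrite iQ => /is_diag_mxP hD.
set D := P *m h *m Q in hD *.
pose d : 'rV[F]_n := \row_k D k k.
have Dd : D = diag_mx d.
  apply/matrixP => i j; rewrite [diag_mx d i j]mxE.
  case: (eqVneq i j) => [->|ne]; first by rewrite mulr1n /d [in RHS]mxE.
  by rewrite mulr0n hD.
have hQDP : h = Q *m diag_mx d *m P.
  by rewrite -Dd /D !mulmxA QP mul1mx -mulmxA QP mulmx1.
have eqd : forall i j : 'I_n, (m <= j)%N -> (i < m)%N -> d 0 j = d 0 i.
  move=> i j hj hi; apply/eqP; rewrite -subr_eq0 -(@key _ _ m d i j hj hi) -hQDP.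
  by rewrite (hz h hH).
pose j0 : 'I_n := Ordinal hmn.
pose i0 : 'I_n := Ordinal (ltn_trans hm0 hmn).
apply/is_scalar_mxP; exists (d 0 j0); rewrite Dd.
apply/matrixP => i j; rewrite [diag_mx d i j]mxE [((d 0 j0)%:M) i j]mxE.
congr (_ *+ _).
case: (ltnP i m) => hi.
  by rewrite (eqd i j0).
by rewrite (eqd i0 i) // (eqd i0 j0).
Qed.
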